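(* Let $\mathbf{f}=\{f_1,\dots,f_m\}$ be a simple problem and $\mathbf{g}\subseteq\mathbf{f}$ a subproblem. Then for each $i\in\{1,\dots,m\}$, the restriction of the projection $\pi_{-i}:\mathbb{R}^m\to\mathbb{R}^m$, $(y_1,\dots,y_m)\mapsto(y_1,\dots,y_{i-1},0,y_{i+1},\dots,y_m)$, to $\operatorname{Int}\mathbf{f}X^*(\mathbf{g})$ is a topological embedding.
   Context: A problem is a finite set $\mathbf{f}=\{f_1,\dots,f_m\}$ of functions $f_i:\mathbb{R}^n\to\mathbb{R}$ together with a feasible region $X\subseteq\mathbb{R}^n$, to be minimized simultaneously; its evaluation map is $x\mapsto(f_1(x),\dots,f_m(x))$. A subproblem $\mathbf{g}\subseteq\mathbf{f}$ is a subset of these functions (including $\emptyset$ and $\mathbf{f}$), with the same $X$; its evaluation map is $x\mapsto(f_i(x))_{f_i\in\mathbf{g}}\in\mathbb{R}^{|\mathbf{g}|}$. The Pareto set $X^*(\mathbf{g})$ is the set of $x^*\in X$ for which there is no $x\in X$ with $f_i(x)\le f_i(x^* )$ for all $f_i\in\mathbf{g}$ and $f_j(x)<f_j(x^* )$ for some $f_j\in\mathbf{g}$; by convention $X^*(\emptyset)=\emptyset$. $\mathbf{f}X^*(\mathbf{g})$ denotes the image of $X^*(\mathbf{g})$ under the evaluation map of $\mathbf{f}$. A problem $\mathbf{f}$ is simple if every subproblem $\mathbf{g}\subseteq\mathbf{f}$ with $k=|\mathbf{g}|$ objectives satisfies: (S1) $X^*(\mathbf{g})$ is homeomorphic to $\Delta^{k-1}=\{t\in[0,1]^k:\sum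 t_i=1\}$ (with $\Delta^{-1}=\emptyset$); (S2) the evaluation map of $\mathbf{g}$ restricted to $X^*(\mathbf{g})$ is a topological embedding into $\mathbb{R}^k$. For a simple problem, each $\mathbf{f}X^*(\mathbf{g})$ is homeomorphic to $\Delta^{|\mathbf{g}|-1}$, hence a topological manifold with boundary; $\operatorname{Int}$ and $\partial$ denote its manifold interior and manifold boundary (for a single point, the interior is the point and the boundary is empty). All sets carry the subspace topology from Euclidean space. *)

(* Defs.v *)
From Stdlib Require Import Reals.
From mathcomp Require Import all_boot.
Unset Printing Implicit Defensive.

Local Open Scope R_scope.

Definition Rn (a : nat) := 'I_a -> R.

(* Open sup-norm ball relation: the sup-metric induces the Euclidean topology. *)
Definition near {a : nat} (x y : Rn a) (d : R) : Prop :=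
  forall j : 'I_a, Rabs (x j - y j) < d.

Definition embedding_on {a b : nat} (h : Rn a -> Rn b) (S : Rn a -> Prop) : Prop :=
  (forall x y, S x -> S y -> h x = h y -> x = y) /\
  (forall x, S x -> forall eps, 0 < eps -> exists del, 0 < del /\
     forall y, S y -> near x y del -> near (h x) (h y) eps) /\
  (forall x, S x -> forall eps, 0 < eps -> exists del, 0 < del /\
     forall y, S y -> near (h x) (h y) del -> near x y eps).

Definition homeomorphic {a b : nat} (S : Rn a -> Prop) (V : Rn b -> Prop) : Prop :=
  exists h : Rn a -> Rn b, embedding_on h S /\
    (forall x, S x -> V (h x)) /\ (forall y, V y -> exists x, S x /\ h x = y).

Definition open_set_Rn {a : nat} (U : Rn a -> Prop) : Prop :=
  forall x, U x -> exists eps, 0 < eps /\ forall y, near x y eps -> U y.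

Definition rel_open {a : nat} (M U : Rn a -> Prop) : Prop :=
  (forall x, U x -> M x) /\
  forall x, U x -> exists eps, 0 < eps /\ forall y, M y -> near x y eps -> U y.

(* Manifold interior of a d-dimensional topological manifold (with boundary)
   M : points having an open neighbourhood in M homeomorphic to an open
   subset of R^d. *)
Definition manifold_interior {a : nat} (d : nat) (M : Rn a -> Prop) (p : Rn a) : Prop :=
  M p /\ exists U : Rn a -> Prop, rel_open M U /\ U p /\
    exists V : Rn d -> Prop, open_set_Rn V /\ homeomorphic U V.

(* Standard simplex Delta^{k-1} in R^k (empty for k = 0). *)
Definition simplex (k : nat) : Rn k -> Prop :=
  fun t => (forall j, 0 <= t j <= 1) /\ \big[Rplus/0]_(j < k) t j = 1.

(* A problem with m objectives f i : R^n -> R on the feasible region X;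
   a subproblem is a set g of objective indices. *)

(* Pareto set X*(g), with X*(emptyset) = emptyset. *)
Definition pareto {n m : nat} (f : 'I_m -> Rn n -> R) (X : Rn n -> Prop)
  (g : {set 'I_m}) : Rn n -> Prop :=
  fun xs => g != set0 /\ X xs /\
    ~ (exists x, X x /\ (forall i, i \in g -> f i x <= f i xs) /\
                 (exists j, j \in g /\ f j x < f j xs)).

Definition eval_sub {n m : nat} (f : 'I_m -> Rn n -> R) (g : {set 'I_m})
  : Rn n -> Rn #|g| :=
  fun x j => f (enum_val j) x.

Definition eval_all {n m : nat} (f : 'I_m -> Rn n -> R) : Rn n -> Rn m :=
  fun x i => f i x.

Definition image_pareto {n m : nat} (f : 'I_m -> Rn n -> R) (X : Rn n -> Prop)
  (g : {set 'I_m}) : Rn m -> Prop :=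
  fun y => exists x, pareto f X g x /\ eval_all f x = y.

Definition simple_problem {n m : nat} (f : 'I_m -> Rn n -> R) (X : Rn n -> Prop) : Prop :=
  forall g : {set 'I_m},
    homeomorphic (pareto f X g) (simplex #|g|) /\
    embedding_on (eval_sub f g) (pareto f X g).

Definition proj_minus {m : nat} (i : 'I_m) (y : Rn m) : Rn m :=
  fun j => if j == i then 0 else y j.

(* Main.v *)
Require Import Defs.
From mathcomp Require Import all_boot all_order all_algebra.
From mathcomp Require Import all_classical all_reals all_analysis.
From mathcomp Require Import Rstruct Rstruct_topology.
From Stdlib Require Import Reals Lra.
From Stdlib Require Import Classical ClassicalEpsilon FunctionalExtensionality.

Module CubeCompact.
Import Order.TTheory GRing.Theory Num.Theory.
Import numFieldNormedType.Exports.
Local Open Scope classical_set_scope.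
Local Open Scope R_scope.

Lemma cube_cluster (d:nat) (t : nat -> 'I_d -> R) :
 (forall k j, Rle 0 (t k j) /\ Rle (t k j) 1) ->
 exists p : 'I_d -> R, (forall j, Rle 0 (p j) /\ Rle (p j) 1) /\
   forall (del:R) (N:nat), Rlt 0 del -> exists k, leq N k /\
     forall j, Rlt (Rabs (p j - t k j)) del.
Proof.
Local Open Scope ring_scope.
move=> Ht.
have K := @rV_compact R d (fun _ => `[0:R, 1]%classic) (fun _ => @segment_compact R 0 1).
pose F := (fun k => \row_j t k j) @ \oo.
have : [set v : 'rV[R]_d | forall i, `[0:R,1]%classic (v ord0 i)] `&` cluster F !=set0.
  apply: K.
  exists 0%N => // k _ j /=; rewrite mxE in_itv /=; apply/andP; split; apply/RleP; apply (Ht k j).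
case=> v [Av Cv].
exists (fun j => v ord0 j); split.
  move=> j; have := Av j. rewrite /= in_itv /= => /andP[h1 h2]; split; exact/RleP.
move=> del N del0.
have := Cv [set w | exists k, leq N k /\ w = \row_j t k j] (ball v del).
case.
- by exists N => // k Nk /=; exists k.
- apply: nbhsx_ballx; exact/RltP.
move=> w [[k [Nk ->]] B]; exists k; split => // j.
have := B.2 ord0 j; rewrite /ball /= mxE RabsE => h. exact/RltP.
Qed.
End CubeCompact.

Import CubeCompact.
Local Open Scope R_scope.

Lemma small_zero z : (forall e, 0 < e -> Rabs z < e) -> z = 0.
Proof.
move=> H; case: (Req_dec z 0) => // hz.
have := Rabs_pos_lt z hz => hp; have := H _ hp; lra.
Qed.

Lemma abs_tri a b c e1 e2 : Rabs (a - c) < e1 -> Rabs (c - b) < e2 -> Rabs (a - b) < e1 + e2.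
Proof.
move=> /Rabs_def2 [h1 h2] /Rabs_def2 [h3 h4]; apply: Rabs_def1; lra.
Qed.

Lemma near_sym a (x y : Rn a) e : Defs.near x y e -> Defs.near y x e.
Proof. move=> H j; rewrite Rabs_minus_sym; exact: H. Qed.

Lemma sum_close k (a b : 'I_k -> R) del :
  (forall j, Rabs (a j - b j) < del) ->
  Rabs (\big[Rplus/0]_(j < k) a j - \big[Rplus/0]_(j < k) b j) <= INR k * del.
Proof.
elim: k a b => [|k IH] a b H.
  rewrite !big_ord0 /=; replace (0 - 0) with 0 by ring; rewrite Rabs_R0; lra.
rewrite !big_ord_recr S_INR.
have := IH (fun j => a (widen_ord (leqnSn k) j)) (fun j => b (widen_ord (leqnSn k) j)) (fun j => H _).
have := H ord_max.
set A := \big[Rplus/0]_(j < k) _; set B := \big[Rplus/0]_(j < k) _.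
move=> h1 h2.
have := Rabs_triang (A - B) (a ord_max - b ord_max).
replace (A - B + (a ord_max - b ord_max)) with (A + a ord_max - (B + b ord_max)) by ring.
move=> h3; change (Rabs (A + a ord_max - (B + b ord_max)) <= (INR k + 1) * del).
lra.
Qed.

Lemma proj_near m i (a b : Rn m) e : 0 < e -> Defs.near a b e ->
  Defs.near (proj_minus i a) (proj_minus i b) e.
Proof.
move=> he H j; rewrite /proj_minus; case: (j == i); last exact: H.
replace (0 - 0) with 0 by ring; rewrite Rabs_R0; lra.
Qed.

Set Implicit Arguments.
Section Main.
Variables (n m : nat) (f : 'I_m -> Rn n -> R) (X : Rn n -> Prop).
Hypothesis Hsimple : simple_problem f X.

Lemma eqg_eval (g : {set 'I_m}) x x' : (forall k, k \in g -> f k x = f k x') ->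
  eval_sub f g x = eval_sub f g x'.
Proof. move=> H; apply: functional_extensionality => j; rewrite /eval_sub; apply: H; exact: enum_valP. Qed.

Lemma pareto_same (g : {set 'I_m}) x x' : pareto f X g x -> X x' ->
  (forall k, k \in g -> f k x' = f k x) -> pareto f X g x'.
Proof.
move=> [g0 [Xx nd]] Xx' H; split=>//; split=>//.
move=> [z [Xz [Hle [j [jg Hlt]]]]]; apply: nd; exists z; split=>//; split.
  move=> k kg; rewrite -H //; auto.
exists j; split=>//; rewrite -H //.
Qed.

Lemma pareto_inj (g : {set 'I_m}) x x' : pareto f X g x -> pareto f X g x' ->
  (forall k, k \in g -> f k x = f k x') -> x = x'.
Proof. move=> Sx Sx' H; apply: (proj1 (proj2 (Hsimple g))) => //; exact: eqg_eval. Qed.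

Lemma pareto_top (g : {set 'I_m}) x : pareto f X g x -> pareto f X [set: 'I_m] x.
Proof.
move=> Sx; have [g0 [Xx nd]] := Sx.
split. apply/set0Pn; case/set0Pn: g0 => k _; exists k; exact: finset.in_setT.
split=>//. move=> [x' [Xx' [Hle [j [_ Hlt]]]]].
case: (classic (exists k, k \in g /\ f k x' < f k x)) => [Hs|Hn].
  apply: nd; exists x'; split=>//; split=>//. move=> k _; apply: Hle; exact: finset.in_setT.
have Heq : forall k, k \in g -> f k x' = f k x.
  move=> k kg; have hle := Hle k (finset.in_setT k).
  case: (Rle_lt_or_eq_dec _ _ hle) => // hlt. exfalso; apply: Hn; by exists k.
have Sx' := pareto_same Sx Xx' Heq.
have E := pareto_inj Sx' Sx Heq. subst x'. lra.
Qed.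

Lemma E_cont (g : {set 'I_m}) x : pareto f X g x -> forall eps, 0 < eps -> exists del, 0 < del /\
  forall y, pareto f X g y -> Defs.near x y del -> Defs.near (eval_all f x) (eval_all f y) eps.
Proof.
move=> Sx eps he.
have [del [hd Hd]] := (proj1 (proj2 (proj2 (Hsimple [set: 'I_m])))) x (pareto_top Sx) eps he.
exists del; split=>// y Sy nxy k.
have := Hd y (pareto_top Sy) nxy (enum_rank_in (finset.in_setT k) k).
rewrite /eval_sub /eval_all enum_rankK_in //; exact: finset.in_setT.
Qed.

Lemma img_inj (g : {set 'I_m}) (i : 'I_m) x x' : pareto f X g x -> pareto f X g x' ->
  proj_minus i (eval_all f x) = proj_minus i (eval_all f x') ->
  eval_all f x = eval_all f x'.
Proof.
move=> Sx Sx' Hp.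
have Hne : forall k, k != i -> f k x = f k x'.
  move=> k ki; have := f_equal (fun u => u k) Hp; rewrite /proj_minus /eval_all (negbTE ki); done.
have Heq : forall k, k \in g -> f k x = f k x'.
  move=> k kg; case: (eqVneq k i) kg => [-> ig|ki _]; last exact: Hne.
  case: (Rtotal_order (f i x) (f i x')) => [hlt|[//|hgt]]; exfalso.
  - have [_ [_ nd]] := Sx'. apply: nd; exists x; split; first by case: Sx => _ [].
    split; last by exists i; split.
    move=> l lg; case: (eqVneq l i) => [->|li]; [lra| rewrite (Hne l li); lra].
  - have [_ [_ nd]] := Sx. apply: nd; exists x'; split; first by case: Sx' => _ [].
    split; last by exists i; split.
    move=> l lg; case: (eqVneq l i) => [->|li]; [lra| rewrite (Hne l li); lra].
by rewrite (pareto_inj Sx Sx' Heq).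
Qed.

Lemma inv_cont (g : {set 'I_m}) (i : 'I_m) x : pareto f X g x -> forall eps, 0 < eps -> exists del, 0 < del /\
  forall x', pareto f X g x' ->
    Defs.near (proj_minus i (eval_all f x)) (proj_minus i (eval_all f x')) del ->
    Defs.near (eval_all f x) (eval_all f x') eps.
Proof.
move=> Sx eps he.
apply: NNPP => Hno.
have Hseq : forall k : nat, exists x', pareto f X g x' /\
   Defs.near (proj_minus i (eval_all f x)) (proj_minus i (eval_all f x')) (/ (INR k + 1)) /\
   ~ Defs.near (eval_all f x) (eval_all f x') eps.
  move=> k; apply: NNPP => Hk; apply: Hno; exists (/ (INR k + 1)); split.
    apply: Rinv_0_lt_compat; have := pos_INR k; lra.
  move=> x' Sx' hn; apply: NNPP => hne; apply: Hk; exists x'; tauto.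
pose xs := fun k => proj1_sig (constructive_indefinite_description _ (Hseq k)).
have Hxs : forall k, _ := fun k => proj2_sig (constructive_indefinite_description _ (Hseq k)).
rewrite -/xs in Hxs.
have [[h [[hinj [hc hic]] [hS hsurj]]] _] := Hsimple g.
pose t := fun k => h (xs k).
have Ht : forall k j, Rle 0 (t k j) /\ Rle (t k j) 1.
  move=> k j; exact: (proj1 (hS _ (proj1 (Hxs k))) j).
have [p [Hp Hcl]] := @cube_cluster _ t Ht.
have Hsum : \big[Rplus/0]_(j < #|g|) p j = 1.
  apply: Rminus_diag_uniq; apply: small_zero => e he'.
  have hD := pos_INR #|g|.
  pose del := e / (INR #|g| + 1).
  have hdel : 0 < del by rewrite /del; apply: Rdiv_lt_0_compat; lra.
  have hde : del * (INR #|g| + 1) = e by rewrite /del; field; lra.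
  have [k [_ Hk]] := Hcl del O hdel.
  have hs := @sum_close _ _ _ _ Hk.
  have ht1 := proj2 (hS _ (proj1 (Hxs k))).
  rewrite -/(t k) in ht1. rewrite ht1 in hs.
  have : INR #|g| * del < e by nra.
  lra.
have [xst [Sxst hxst]] := hsurj p (conj Hp Hsum).
have Hclose : forall eps', 0 < eps' -> forall N, exists k, leq N k /\
    Defs.near (eval_all f xst) (eval_all f (xs k)) eps'.
  move=> e he' N.
  have [del1 [hd1 H1]] := E_cont Sxst he'.
  have [del2 [hd2 H2]] := hic xst Sxst del1 hd1.
  have [k [Nk Hk]] := Hcl del2 N hd2.
  exists k; split=>//; apply: H1; first exact: (proj1 (Hxs k)).
  apply: H2; first exact: (proj1 (Hxs k)).
  by rewrite hxst.
have Hproj : proj_minus i (eval_all f xst) = proj_minus i (eval_all f x).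
  apply: functional_extensionality => j; apply: Rminus_diag_uniq; apply: small_zero => e he'.
  have [N [hN N0]] := archimed_cor1 (e/2) ltac:(lra).
  have [k [Nk Hk]] := Hclose (e/2) ltac:(lra) N.
  have hk1 := proj1 (proj2 (Hxs k)).
  have hk2 := @proj_near _ i _ _ (e/2) ltac:(lra) Hk j.
  have hle : / (INR k + 1) <= / INR N.
    apply: Rinv_le_contravar; first by apply: lt_0_INR.
    have := le_INR N k (elimT leP Nk); lra.
  have := @abs_tri _ _ _ _ _ hk2 (@near_sym _ _ _ _ hk1 j); lra.
have Heq := img_inj Sxst Sx Hproj.
have [k [_ Hk]] := Hclose eps he O.
apply: (proj2 (proj2 (Hxs k))).
by move: Hk; rewrite Heq.
Qed.

End Main.
Unset Implicit Arguments.

Theorem corollary1 (n m : nat) (f : 'I_m -> Rn n -> R) (X : Rn n -> Prop)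
  (Hsimple : simple_problem f X) (g : {set 'I_m}) (i : 'I_m) :
  embedding_on (proj_minus i)
    (manifold_interior (#|g|.-1) (image_pareto f X g)).
Proof.
have Hemb : embedding_on (proj_minus i) (image_pareto f X g).
  split; [|split].
  - move=> y y' [x [Sx <-]] [x' [Sx' <-]] Hp; exact: (img_inj Hsimple Sx Sx' Hp).
  - move=> y _ eps he; exists eps; split=>// y' _; exact: proj_near.
  - move=> y [x [Sx <-]] eps he.
    have [del [hd H]] := inv_cont Hsimple i Sx he.
    exists del; split=>// y' [x' [Sx' <-]]; exact: H.
case: Hemb => [H1 [H2 H3]]; split; [|split].
- move=> x y [hx _] [hy _]; exact: H1.
- move=> x [hx _] eps he; have [del [hd H]] := H2 x hx eps he.
  exists del; split=>// y [hy _]; exact: H.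
- move=> x [hx _] eps he; have [del [hd H]] := H3 x hx eps he.
  exists del; split=>// y [hy _]; exact: H.
Qed.
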